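(* Let $\mathbf{X},\mathbf{Y}$ be Banach spaces, $\mathcal{S}\subset\mathbf{X}$, $\mathcal{S}'\subset\mathbf{Y}$, and let $\Phi:\mathcal{S}\to\mathcal{S}'$ be measurable and expansive, i.e., there is $\kappa>0$ with $\|\Phi(\mathbf{x})-\Phi(\mathbf{x}')\|_{\mathbf{Y}}\ge\kappa\|\mathbf{x}-\mathbf{x}'\|_{\mathbf{X}}$ for all $\mathbf{x},\mathbf{x}'\in\mathcal{S}$. If $s_0\ge0$ and $\mathbb{P}$ is a Borel probability measure on $\mathcal{S}$ of growth order $s_0$ (w.r.t. $\mathbf{X}$), then $\mathbb{P}\circ\Phi^{-1}$ is a Borel probability measure on $\mathcal{S}'$ of growth order $s_0$ (w.r.t. $\mathbf{Y}$).
   Context: Subsets of Banach spaces carry the trace of the Borel $\sigma$-algebra of the ambient space (this defines measurability of $\Phi$ and Borel measures on subsets). A Borel probability measure $\mathbb{P}$ on $\mathcal{S}\subset\mathbf{X}$ has (logarithmic) growth order $s_0\in[0,\infty)$ w.r.t. $\mathbf{X}$ if for every $s>s_0$ there are $\varepsilon_0,c>0$ with $\mathbb{P}(\mathcal{S}\cap\mathcal{B}(\mathbf{x},\varepsilon;\mathbf{X}))\le2^{-c\varepsilon^{-1/s}}$ for all $\mathbf{x}\in\mathbf{X}$ and $\varepsilon\in(0,\varepsilon_0)$, where $\mathcal{B}(\mathbf{x},\varepsilon;\mathbf{X})$ is the closed ball. *)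

(* Defs.v *)
From HB Require Import structures.
From mathcomp Require Import all_boot all_order all_algebra.
From mathcomp Require Import all_classical all_reals all_analysis.
Set Implicit Arguments. Unset Strict Implicit. Unset Printing Implicit Defensive.
Import Order.TTheory GRing.Theory Num.Theory.
Import numFieldNormedType.Exports.
Local Open Scope classical_set_scope.
Local Open Scope ring_scope.

Definition Borel (T : ptopologicalType) := g_sigma_algebraType (@open T).

(* The witness [x0 \in S] is only used to
   equip the subtype with the pointed structure required by MathComp-Analysis
   measurable types (a probability measure on S forces S to be nonempty). *)
Record sub_space (X : Type) (S : set X) (x0 : X) (hx0 : S x0) := SubSpace {
  sub_val : X ;
  sub_valP : S sub_val }.
Arguments sub_val {X S x0 hx0}.

Section sub_space_instances.
Context (X : Type) (S : set X) (x0 : X) (hx0 : S x0).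
HB.instance Definition _ := gen_eqMixin (sub_space hx0).
HB.instance Definition _ := gen_choiceMixin (sub_space hx0).
HB.instance Definition _ := isPointed.Build (sub_space hx0) (@SubSpace X S x0 hx0 x0 hx0).
End sub_space_instances.

(* [S] with the trace of the Borel sigma-algebra of the ambient space [X]:
   the measurable sets are exactly the [S `&` B] (seen in S) with B Borel. *)
Definition trace_space (X : ptopologicalType) (S : set X) (x0 : X)
  (hx0 : S x0) :=
  g_sigma_algebra_preimageType (@sub_val X S x0 hx0 : sub_space hx0 -> Borel X).

Definition has_growth_order (R : realType) (X : normedModType R) (S : set X)
  (x0 : X) (hx0 : S x0) (mu : set (trace_space hx0) -> \bar R) (s0 : R) :=
  forall s : R, s0 < s ->
    exists eps0 c : R, 0 < eps0 /\ 0 < c /\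
      forall (x : X) (eps : R), 0 < eps -> eps < eps0 ->
        (mu ((@sub_val X S x0 hx0) @^-1` [set y : X | (`|x - y| <= eps)%R])
          <= (2 `^ (- (c * eps `^ (- s^-1))))%R%:E)%E.

(* Main.v *)
Require Import Defs.
From HB Require Import structures.
From mathcomp Require Import all_boot all_order all_algebra.
From mathcomp Require Import all_classical all_reals all_analysis.
Import Order.TTheory GRing.Theory Num.Theory.
Import numFieldNormedType.Exports.
Local Open Scope classical_set_scope.
Local Open Scope ring_scope.
From mathcomp Require Import lra.

Lemma ball_meas (R : realType) (X : normedModType R) (S : set X) (x0 : X) (hx0 : S x0) (x : X) (e : R) :
  measurable ((@sub_val X S x0 hx0 : trace_space hx0 -> _) @^-1` [set y : X | `|x - y| <= e]).
Proof.
exists [set y : X | `|x - y| <= e]; last by rewrite setTI.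
have Hc := @closed_closed_ball_ R X x e.
rewrite -[X in measurable X]setCK.
apply: (@measurableC _ (Borel X)).
apply: sub_sigma_algebra. exact: (closed_openC Hc).
Qed.

Arguments ball_meas {R X S x0 hx0} x e.

Definition mk_mfun d d' (T : measurableType d) (T' : measurableType d') (f : T -> T')
  (mf : measurable_fun setT f) : {mfun T >-> T'} :=
  HB.pack f (isMeasurableFun.Build _ _ _ _ f mf).

Theorem lemmaA1 (R : realType) (X Y : completeNormedModType R)
  (S : set X) (S' : set Y) (x0 : X) (hx0 : S x0) (y0 : Y) (hy0 : S' y0)
  (Phi : trace_space hx0 -> trace_space hy0)
  (mPhi : measurable_fun [set: trace_space hx0] Phi)
  (expansive : exists kappa : R, 0 < kappa /\
     forall x x' : trace_space hx0,
       kappa * `|sub_val x - sub_val x'| <= `|sub_val (Phi x) - sub_val (Phi x')|)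
  (s0 : R) (hs0 : 0 <= s0)
  (P : probability (trace_space hx0) R)
  (hP : has_growth_order P s0) :
  exists Q : probability (trace_space hy0) R,
    (forall A : set (trace_space hy0), Q A = pushforward P Phi A) /\
    has_growth_order Q s0.
Proof.
move: expansive => [k [k0 hk]].
pose f := @mk_mfun _ _ _ _ Phi mPhi.
exists (distribution P f); split; first by [].
move=> s ss0; have [e0 [c [e00 [c0 H]]]] := hP s ss0.
have s0' : 0 < s by apply: le_lt_trans ss0.
exists (e0 * k / 2), (c * (2 / k) `^ (- s^-1)).
split; first by rewrite divr_gt0 // mulr_gt0.
split; first by rewrite mulr_gt0 // powR_gt0 // divr_gt0.
move=> y e e0' ee0.
change (P (Phi @^-1` ((@sub_val Y S' y0 hy0) @^-1` [set z | (`|y - z| <= e)%R])) <= ((2 `^ (- (c * (2 / k) `^ (- s^-1) * e `^ (- s^-1))))%:E))%E.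
have [[x1 Hx1]|Hn] := pselect (exists x1, `|y - sub_val (Phi x1)| <= e).
  have he : 0 < 2 * e / k by rewrite divr_gt0 // mulr_gt0.
  have he2 : 2 * e / k < e0.
    rewrite ltr_pdivrMr //. rewrite ltr_pdivlMr // in ee0. lra.
  apply: (@le_trans _ _ (P ((@sub_val X S x0 hx0) @^-1` [set z | `|sub_val x1 - z| <= 2 * e / k]))).
    apply: (le_measure P); rewrite ?inE.
    - rewrite -[X in measurable X]setTI; exact: mPhi measurableT _ (ball_meas y e).
    - exact: ball_meas.
    - move=> x /= hx.
      rewrite ler_pdivlMr // mulrC.
      apply: le_trans (hk x1 x) _.
      apply: le_trans (ler_distD y _ _) _.
      rewrite distrC. lra.
  apply: le_trans (H (sub_val x1) (2 * e / k) he he2) _.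
  rewrite lee_fin.
  have -> : 2 * e / k = (2 / k) * e by rewrite mulrAC.
  rewrite powRM ?mulrA //; last (by rewrite ltW); last (by rewrite divr_ge0 // ltW).
have -> : Phi @^-1` ((@sub_val Y S' y0 hy0) @^-1` [set z | `|y - z| <= e]) = set0.
  apply/seteqP; split => x //= hx; exfalso; apply: Hn; exists x; exact: hx.
by rewrite measure0 lee_fin powR_ge0.
Qed.
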